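(* Let $G$ be a non-complete double-critical $k$-chromatic graph and $x\in V(G)$. Then $\alpha_x\ge 2$, and $$\deg_G(x)-\alpha_x\ \ge\ |B(xy)|+1\ \ge\ k-1,$$ where $y\in N(x)$ is any vertex contained in an independent set of $G_x$ of size $\alpha_x$.
   Context: All graphs are finite and simple. A graph $G$ is (vertex-)critical if $\chi(G-v)<\chi(G)$ for every vertex $v\in V(G)$. A critical graph $G$ is double-critical if $\chi(G-x-y)\le\chi(G)-2$ for every edge $xy\in E(G)$. For a vertex $x$, $G_x:=G[N(x)]$ is the subgraph induced by the neighbourhood of $x$ and $\alpha_x:=\alpha(G_x)$ its independence number. For an edge $xy$, $B(xy):=N(x)\cap N(y)$ is the common neighbourhood of $x$ and $y$. *)

(* Defs.v *)
From mathcomp Require Import all_boot.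
Set Implicit Arguments. Unset Strict Implicit. Unset Printing Implicit Defensive.

Section Graph.
Variables (T : finType) (e : rel T).

Definition simple_graph : Prop := symmetric e /\ irreflexive e.

Definition colorableb (S : {set T}) (k : nat) : bool :=
  [exists f : {ffun T -> 'I_k},
     [forall x in S, forall y in S, e x y ==> (f x != f y)]].

(* chromatic number of G[S]; #|T| colours always suffice, so this is the
   least k with a proper k-colouring of G[S] *)
Definition chi (S : {set T}) : nat :=
  \big[minn/#|T|]_(k < #|T|.+1 | colorableb S k) (k : nat).

Definition chiG : nat := chi [set: T].

Definition critical : Prop :=
  forall v : T, chi ([set: T] :\ v) < chiG.

Definition double_critical : Prop :=
  critical /\ forall x y : T, e x y -> chi ([set: T] :\ x :\ y) <= chiG - 2.

Definition complete : Prop := forall x y : T, x != y -> e x y.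

Definition nbhd (x : T) : {set T} := [set y | e x y].

Definition independent (I : {set T}) : bool :=
  [forall x in I, forall y in I, ~~ e x y].

Definition alpha_at (x : T) : nat :=
  \max_(I : {set T} | (I \subset nbhd x) && independent I) #|I|.

Definition common_nbhd (x y : T) : {set T} := nbhd x :&: nbhd y.

End Graph.

(* Main.v *)
Require Import Defs.
From mathcomp Require Import all_boot.
From mathcomp Require Import zify.
Set Implicit Arguments. Unset Strict Implicit. Unset Printing Implicit Defensive.

Lemma bigmin_le_seq (I : eqType) (s : seq I) (F : I -> nat) d i :
  i \in s -> \big[minn/d]_(j <- s) F j <= F i.
Proof.
elim: s => [|a s IH] //= ; rewrite in_cons big_cons => /orP [/eqP ->|/IH h].
  exact: geq_minl.
exact: leq_trans (geq_minr _ _) h.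
Qed.

Lemma bigmin_le (I : finType) (P : pred I) (F : I -> nat) d i :
  P i -> \big[minn/d]_(j | P j) F j <= F i.
Proof.
move=> Pi; rewrite -big_filter; apply: bigmin_le_seq.
by rewrite mem_filter Pi mem_index_enum.
Qed.

Section Col.
Variables (T : finType) (e : rel T).
Hypothesis esym : symmetric e.
Hypothesis eirr : irreflexive e.

Definition ncol (S : {set T}) m (g : T -> nat) :=
  (forall v, v \in S -> g v < m) /\
  (forall u v, u \in S -> v \in S -> e u v -> g u != g v).

Lemma colP (S : {set T}) m (f : {ffun T -> 'I_m}) :
  [forall x in S, forall y in S, e x y ==> (f x != f y)] ->
  forall u v, u \in S -> v \in S -> e u v -> f u != f v.
Proof.
move=> /forallP H u v Hu Hv Huv.
by move: (H u) => /implyP/(_ Hu)/forallP/(_ v)/implyP/(_ Hv)/implyP/(_ Huv).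
Qed.

Lemma colorable_card S : colorableb e S #|T|.
Proof.
apply/existsP; exists [ffun v => enum_rank v].
apply/forallP => u; apply/implyP => _; apply/forallP => v; apply/implyP => _.
apply/implyP => huv; rewrite !ffunE; apply/eqP => /enum_rank_inj h.
by rewrite h eirr in huv.
Qed.

Lemma chi_col S : colorableb e S (chi e S).
Proof.
rewrite /chi; apply: (big_ind (fun n => colorableb e S n)).
- exact: colorable_card.
- by move=> a b Ha Hb; rewrite /minn; case: ifP.
- by [].
Qed.

Lemma chi_leT S : chi e S <= #|T|.
Proof.
rewrite /chi; apply: (big_ind (fun n => n <= #|T|)) => //.
- move=> a b Ha Hb; exact: leq_trans (geq_minl _ _) Ha.
- by move=> i _; rewrite -ltnS ltn_ord.
Qed.

Lemma chi_min S j : colorableb e S j -> chi e S <= j.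
Proof.
move=> Hj; case: (leqP j #|T|) => hj; last exact: leq_trans (chi_leT S) (ltnW hj).
rewrite /chi; have hj' : j < #|T|.+1 by [].
exact: (@bigmin_le _ (fun k : 'I_#|T|.+1 => colorableb e S k) (fun k => (k : nat)) _ (Ordinal hj')).
Qed.

Lemma ncol_chi S m g : 0 < m -> ncol S m g -> chi e S <= m.
Proof.
move=> m0 [Hb Hp]; apply: chi_min; apply/existsP.
pose o := Ordinal m0.
exists [ffun v => insubd o (g v)].
apply/forallP => u; apply/implyP => Hu; apply/forallP => v; apply/implyP => Hv.
apply/implyP => huv; rewrite !ffunE; apply/eqP => h.
have hu := Hb u Hu; have hv := Hb v Hv.
have := congr1 val h; rewrite !insubdK // => /eqP.
by apply/negP; apply: Hp.
Qed.

Lemma chi_pos S (x : T) : 0 < chi e S.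
Proof.
move: (chi_col S); case: (chi e S) => // /existsP [f _]; by case: (f x).
Qed.

Lemma clique_le (S K : {set T}) m : K \subset S -> {in K &, forall a b, a != b -> e a b} ->
  colorableb e S m -> #|K| <= m.
Proof.
move=> KS Kc /existsP [f Hf]; have H := colP Hf.
rewrite -(card_in_imset (f := f)).
  by apply: leq_trans (max_card _) _; rewrite card_ord.
move=> a b Ka Kb fab; apply/eqP; apply/negPn/negP => nab; move: fab; apply/eqP.
by apply: H; [exact: (subsetP KS) | exact: (subsetP KS) | exact: Kc].
Qed.

End Col.

Section DC.
Variables (T : finType) (e : rel T).
Hypothesis esym : symmetric e.
Hypothesis eirr : irreflexive e.
Hypothesis dc : double_critical e.

Lemma B_bound x y : e x y -> chiG e - 2 <= #|common_nbhd e x y|.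
Proof.
move=> exy.
have xy : x != y by apply: contraTneq exy => ->; rewrite eirr.
set S := [set: T] :\ x :\ y.
have hm : chi e S <= chiG e - 2 := dc.2 x y exy.
have [f Hf] := existsP (chi_col eirr S).
have Hc := colP Hf.
have fv : forall v, val (f v) < chi e S := fun v => ltn_ord (f v).
have inS : forall w, (w == x) = false -> (w == y) = false -> w \in S.
  by move=> w wx wy; rewrite !inE wx wy.
have k1 : 0 < chiG e := chi_pos eirr [set: T] x.
have hk : chiG e <= chi e S + 2.
  apply: (@ncol_chi _ e _ _ (fun v => if v == x then chi e S else if v == y then (chi e S).+1 else val (f v))); first by rewrite addn2.
  split.
  - move=> v _; case: ifP => _; [lia|]; case: ifP => _; [lia|]; have := fv v; lia.
  - move=> u v _ _ huv.
    repeat case: ifP => [/eqP ?|?]; subst; try by rewrite eirr in huv.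
    all: try (have := fv u; lia).
    all: try (have := fv v; lia).
    all: try by rewrite val_eqE; apply: Hc => //; apply: inS.
    all: try by rewrite neq_ltn ltnSn ?orbT.
have cover : forall c : 'I_(chi e S), exists2 w, w \in common_nbhd e x y & f w = c.
  move=> c; case: (pickP [pred w | (w \in common_nbhd e x y) && (f w == c)]) => [w /andP [Hw /eqP Hfw]|none].
    by exists w.
  exfalso.
  have hc : val c < chi e S := ltn_ord c.
  have : chiG e <= chi e S + 1.
    apply: (@ncol_chi _ e _ _ (fun v => if v == x then val c else if v == y then chi e S
       else if (f v == c) && e x v then chi e S else val (f v))); first by rewrite addn1.
    split.
    - move=> v _; case: ifP => _; [lia|]; case: ifP => _; [lia|]; case: ifP => _; [lia|]; have := fv v; lia.
    - move=> u v _ _ huv.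
      have none' : forall w, w \in common_nbhd e x y -> f w != c.
        by move=> w Hw; move: (none w) => /= /negbT; rewrite negb_and Hw.
      have Bv : forall w, e x w -> e y w -> w \in common_nbhd e x y.
        by move=> w h1 h2; rewrite !inE h1 h2.
      rewrite /=; case: (eqVneq u x) => [ux|ux].
        subst u; case: (eqVneq v x) => [?|vx]; first by subst v; rewrite eirr in huv.
        case: (eqVneq v y) => [?|vy]; first by subst v; rewrite neq_ltn hc.
        rewrite huv andbT; case: (eqVneq (f v) c) => [_|fvc].
          by rewrite neq_ltn hc.
        by rewrite val_eqE eq_sym.
      case: (eqVneq u y) => [uy|uy].
        subst u; case: (eqVneq v x) => [?|vx]; first by subst v; rewrite eq_sym neq_ltn hc.
        case: (eqVneq v y) => [?|vy]; first by subst v; rewrite eirr in huv.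
        case: ifP => [/andP [/eqP fvc exv]|_].
          by have := none' v (Bv v exv huv); rewrite fvc eqxx.
        by rewrite eq_sym neq_ltn fv.
      have uS : u \in S by apply: inS; apply/negbTE.
      case: ifP => [/andP [/eqP fuc exu]|hu].
        case: (eqVneq v x) => [?|vx]; first by subst v; rewrite neq_ltn hc orbT.
        case: (eqVneq v y) => [?|vy].
          subst v.
          have eyu : e y u by rewrite esym.
          by have := none' u (Bv u exu eyu); rewrite fuc eqxx.
        have vS : v \in S by apply: inS; apply/negbTE.
        case: ifP => [/andP [/eqP fvc exv]|_].
          by have := Hc u v uS vS huv; rewrite fuc fvc eqxx.
        by rewrite neq_ltn fv orbT.
      case: (eqVneq v x) => [?|vx].
        subst v; rewrite val_eqE; move: hu; rewrite esym in huv; rewrite huv andbT.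
        by move=> /negbT.
      case: (eqVneq v y) => [?|vy]; first by subst v; rewrite neq_ltn fv.
      have vS : v \in S by apply: inS; apply/negbTE.
      case: ifP => [_|_]; first by rewrite neq_ltn fv.
      by rewrite val_eqE; apply: Hc.
  lia.
have hB : chi e S <= #|common_nbhd e x y|.
  apply: leq_trans (leq_imset_card f (common_nbhd e x y)).
  rewrite -[X in X <= _](card_ord (chi e S)) -cardsT; apply: subset_leq_card.
  apply/subsetP => c _; have [w Hw <-] := cover c; exact: imset_f.
lia.
Qed.

Lemma nbr_lemma x y z : e x y -> e x z -> z != y -> ~~ e y z ->
  exists w, [/\ e x w, e z w, ~~ e y w & w != y].
Proof.
move=> exy exz zy nyz.
case: (pickP [pred w | e x w && e z w && ~~ e y w]) => [w /= /andP [/andP [xw zw] nyw]|none].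
  exists w; split => //; apply: contraNneq nyz => wy; by rewrite -wy esym.
exfalso.
have noneP : forall w, e x w -> e z w -> e y w.
  by move=> w h1 h2; move: (none w) => /=; rewrite h1 h2 /= => /negbFE.
have xz : x != z by apply: contraTneq exz => ->; rewrite eirr.
set S := [set: T] :\ x :\ z.
have hm : chi e S <= chiG e - 2 := dc.2 x z exz.
have [f Hf] := existsP (chi_col eirr S).
have Hc := colP Hf.
have fv : forall v, val (f v) < chi e S := fun v => ltn_ord (f v).
have inS : forall w, w != x -> w != z -> w \in S.
  by move=> w wx wz; rewrite !inE wx wz.
have k1 : 0 < chiG e := chi_pos eirr [set: T] x.
have yx : y != x by apply: contraTneq exy => ->; rewrite eirr.
have yS : y \in S by apply: inS; rewrite // eq_sym.
set j := f y.
have hj : val j < chi e S := fv y.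
have contraj : forall w, w \in S -> e x w -> e z w -> f w = j -> False.
  move=> w wS h1 h2 fw; have := Hc y w yS wS (noneP w h1 h2).
  by rewrite fw /j eqxx.
have : chiG e <= chi e S + 1.
  apply: (@ncol_chi _ e _ _ (fun v => if v == x then chi e S else if v == z then val j
     else if (f v == j) && e z v then chi e S else val (f v))); first by rewrite addn1.
  split.
  - move=> v _; case: ifP => _; [lia|]; case: ifP => _; [lia|]; case: ifP => _; [lia|]; have := fv v; lia.
  - move=> u v _ _ huv.
    rewrite /=; case: (eqVneq u x) => [ux|ux].
      subst u; case: (eqVneq v x) => [?|vx]; first by subst v; rewrite eirr in huv.
      case: (eqVneq v z) => [?|vz]; first by subst v; rewrite neq_ltn hj orbT.
      have vS : v \in S by apply: inS.
      case: ifP => [/andP [/eqP fvj zv]|_]; first by case: (contraj v vS huv zv fvj).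
      by rewrite neq_ltn fv orbT.
    case: (eqVneq u z) => [uz|uz].
      subst u; case: (eqVneq v x) => [?|vx]; first by subst v; rewrite neq_ltn hj.
      case: (eqVneq v z) => [?|vz]; first by subst v; rewrite eirr in huv.
      case: ifP => [_|hv]; first by rewrite neq_ltn hj.
      move: hv; rewrite huv andbT => /negbT.
      by rewrite val_eqE eq_sym.
    have uS : u \in S by apply: inS.
    case: ifP => [/andP [/eqP fuj zu]|hu].
      case: (eqVneq v x) => [?|vx].
        subst v; have xu : e x u by rewrite esym.
        by case: (contraj u uS xu zu fuj).
      case: (eqVneq v z) => [?|vz]; first by subst v; rewrite neq_ltn hj orbT.
      have vS : v \in S by apply: inS.
      case: ifP => [/andP [/eqP fvj zv]|_].
        by have := Hc u v uS vS huv; rewrite fuj fvj eqxx.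
      by rewrite neq_ltn fv orbT.
    case: (eqVneq v x) => [?|vx]; first by subst v; rewrite neq_ltn fv.
    case: (eqVneq v z) => [?|vz].
      subst v; have zu : e z u by rewrite esym.
      move: hu; rewrite zu andbT => /negbT.
      by rewrite val_eqE.
    have vS : v \in S by apply: inS.
    case: ifP => [_|_]; first by rewrite neq_ltn fv.
    by rewrite val_eqE; apply: Hc.
lia.
Qed.

End DC.

Theorem proposition12 (T : finType) (e : rel T) (k : nat) (x : T) :
  simple_graph e -> ~ complete e -> double_critical e -> chiG e = k ->
  2 <= alpha_at e x /\
  forall (y : T) (I : {set T}),
    I \subset nbhd e x -> independent e I -> #|I| = alpha_at e x -> y \in I ->
    #|common_nbhd e x y| + 1 <= #|nbhd e x| - alpha_at e x /\
    k - 1 <= #|common_nbhd e x y| + 1.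
Proof.
move=> [esym eirr] nc dc hk.
have nbhdE : forall w, (w \in nbhd e x) = e x w by move=> w; rewrite inE.
have Ha : 2 <= alpha_at e x.
  case: (boolP [exists a, exists b, [&& e x a, e x b, a != b & ~~ e a b]]) =>
    [/existsP [a /existsP [b /and4P [xa xb ab nab]]] | H].
    apply: leq_trans _ (@leq_bigmax_cond _ _ (fun I : {set T} => #|I|) [set a; b] _).
      by rewrite cards2 ab.
    apply/andP; split.
      by apply/subsetP => w; rewrite !inE => /orP [] /eqP ->.
    apply/forallP => u; apply/implyP; rewrite !inE => /orP [] /eqP ->;
      apply/forallP => v; apply/implyP; rewrite !inE => /orP [] /eqP ->;
      by rewrite ?eirr // esym.
  have clq : forall a b, e x a -> e x b -> a != b -> e a b.
    move=> a b xa xb ab; apply/negPn/negP => nab; move/negP: H; apply.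
    by apply/existsP; exists a; apply/existsP; exists b; rewrite xa xb ab nab.
  exfalso.
  case: (pickP (e x)) => [y xy | iso].
    set K := x |: nbhd e x.
    have xN : x \notin nbhd e x by rewrite nbhdE eirr.
    have cK : #|K| = #|nbhd e x| + 1 by rewrite cardsU1 xN addnC.
    have hB := B_bound esym eirr dc xy.
    have yN : y \in nbhd e x by rewrite nbhdE.
    have hB2 : #|common_nbhd e x y| <= #|nbhd e x :\ y|.
      apply: subset_leq_card; apply/subsetP => w; rewrite !inE => /andP [xw yw].
      by rewrite xw andbT; apply: contraTneq yw => ->; rewrite eirr.
    have hD : #|nbhd e x| = (#|nbhd e x :\ y|).+1 by rewrite (cardsD1 y) yN.
    have Kc : {in K &, forall a b, a != b -> e a b}.
      move=> a b; rewrite !inE => /orP [/eqP ->|xa] /orP [/eqP ->|xb] ab.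
      - by rewrite eqxx in ab.
      - exact: xb.
      - by rewrite esym.
      - exact: clq.
    case: (boolP [exists a, exists b, (a != b) && ~~ e a b]) =>
      [/existsP [a /existsP [b /andP [ab nab]]] | H'].
      have : (a \notin K) || (b \notin K).
        rewrite -negb_and; apply/negP => /andP [aK bK].
        by have := Kc a b aK bK ab; rewrite (negbTE nab).
      have main : forall v, v \notin K -> False.
        move=> v vK; have hv := dc.1 v.
        have := clique_le (S := [set: T] :\ v) (K := K) _ Kc (chi_col eirr _).
        have -> : K \subset [set: T] :\ v.
          by apply/subsetP => w wK; rewrite !inE andbT; apply: contraNneq vK => <-.
        move=> /(_ isT) hK; lia.
      by case/orP => /main.
    apply: nc => a b ab; move: H'; rewrite negb_exists => /forallP /(_ a).
    rewrite negb_exists => /forallP /(_ b); rewrite negb_and ab /=.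
    exact: negbNE.
  have hv := dc.1 x.
  have : chiG e <= chi e ([set: T] :\ x).
    apply: chi_min; have [f Hf] := existsP (chi_col eirr ([set: T] :\ x)).
    have Hc := colP Hf.
    apply/existsP; exists f; apply/forallP => u; apply/implyP => _.
    apply/forallP => v; apply/implyP => _; apply/implyP => huv.
    apply: Hc => //; rewrite !inE andbT.
      by apply: contraTneq huv => ->; rewrite iso.
    by apply: contraTneq huv => ->; rewrite esym iso.
  lia.
split => // y I HI indI cardI yI.
have xy : e x y by rewrite -nbhdE; apply: (subsetP HI).
have indP : forall u v, u \in I -> v \in I -> ~~ e u v.
  move=> u v uI vI; move/forallP: indI => /(_ u) /implyP /(_ uI) /forallP /(_ v).
  by move/implyP/(_ vI).
have [z zI zy] : exists2 z, z \in I & z != y.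
  case: (pickP [pred z in I | z != y]) => [z /andP [zI zy] | none]; first by exists z.
  exfalso; have : I \subset [set y].
    apply/subsetP => w wI; rewrite inE; move: (none w) => /=; rewrite wI /=.
    by move/negbT/negbNE.
  move/subset_leq_card; rewrite cards1; lia.
have xz : e x z by rewrite -nbhdE; apply: (subsetP HI).
have nyz : ~~ e y z by apply: indP.
have [w [xw zw nyw wy]] := nbr_lemma esym eirr dc xy xz zy nyz.
have wI : w \notin I by apply/negP => wI'; have := indP z w zI wI'; rewrite zw.
have wB : w \notin common_nbhd e x y by rewrite !inE (negbTE nyw) andbF.
have IB : I :&: common_nbhd e x y = set0.
  apply/setP => v; rewrite !inE; apply/negP => /and3P [vI _ yv].
  by have := indP y v yI vI; rewrite yv.
have hU := cardsUI I (common_nbhd e x y); rewrite IB cards0 addn0 in hU.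
have wU : w \notin I :|: common_nbhd e x y by rewrite inE negb_or wI wB.
have hW := cardsU1 w (I :|: common_nbhd e x y); rewrite wU in hW.
have sub : w |: (I :|: common_nbhd e x y) \subset nbhd e x.
  apply/subsetP => v; rewrite !inE => /or3P [/eqP -> | vI | /andP [xv _]].
  - by [].
  - by rewrite -nbhdE; apply: (subsetP HI).
  - by [].
have h1 := subset_leq_card sub.
rewrite hW hU cardI /= in h1.
have hB := B_bound esym eirr dc xy; rewrite hk in hB.
move: h1 hB; clear.
move: (alpha_at e x) (#|common_nbhd e x y|) (#|nbhd e x|) => a b n h1 hB.
split; lia.
Qed.
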